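(* Fix any $\alpha\in(0,0.5)$, let $T\ge 16^{1/\alpha}$, and fix any $\delta\le 0.24$. There exists a (finite) hypothesis class $\mathcal{H}$ containing the two constant classifiers $\mathbf{+1}$ and $\mathbf{-1}$ such that any online learning algorithm satisfying $T^{-\alpha}$-EFP($\delta$) fairness has expected regret $\Omega(T^{2\alpha})$ with respect to the set of $0$-EFP fair policies (i.e., for any such algorithm there is a data distribution on which its expected regret with respect to the best $0$-EFP policy is at least $cT^{2\alpha}$ for a universal constant $c>0$).
   Context: Examples are triples $(\hat x,a,y)\in\mathcal{X}\times\{-1,1\}\times\{-1,1\}$ drawn i.i.d. from a distribution $\mathcal{D}$; $x=(\hat x,a)$; hypotheses map $x$ to $\{-1,1\}$; $\Delta(\mathcal{H})$ is the set of distributions over $\mathcal{H}$. $FPR_j(\pi)=\mathbb{E}_{h\sim\pi}[\Pr_{\mathcal{D}}(h(x)=+1\mid a=j,y=-1)]$, $\Delta_{FPR}(\pi)=FPR_1(\pi)-FPR_{-1}(\pi)$, and $\pi$ satisfies $\gamma$-EFP if $|\Delta_{FPR}(\pi)|\le\gamma$. Online protocol: each round $t=1..T$ the learner chooses $\pi_t\in\Delta(\mathcal{H})$, $(x_t,y_t)\sim\mathcal{D}$ is drawn and $x_t$ observed, the learner predicts $\hat y_t=h_t(x_t)$ with $h_t\sim\pi_t$, and observes $y_t$ only if $\hat y_t=+1$. Loss is $0$-$1$. Regret with respect to a class $\mathcal{P}$ is the expected cumulative loss of the learner minus $T$ times the expected loss of the best policy in $\mathcal{P}$. An algorithm satisfies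 $\gamma$-EFP($\delta$) if, with probability at least $1-\delta$ over the examples, every $\pi_t$ satisfies $\gamma$-EFP with respect to the true distribution $\mathcal{D}$ (for whichever distribution it is run on). *)

(* Defs.v *)
From HB Require Import structures.
From mathcomp Require Import all_boot all_order all_algebra.
From mathcomp Require Import reals exp.
Set Implicit Arguments. Unset Strict Implicit. Unset Printing Implicit Defensive.
Import Order.TTheory GRing.Theory Num.Theory.
Local Open Scope ring_scope.

(* Conventions: labels and group attributes in {-1,1} are encoded as bool,
   true = +1, false = -1.  An example (xhat, a, y) is ((xhat, a), y) : Ex Xh,
   so that z.1 = x = (xhat, a), z.1.2 = a, z.2 = y. *)

Definition Ex (Xh : finType) : finType := ((Xh * bool) * bool)%type.

Definition is_fdist (R : realType) (T : finType) (p : {ffun T -> R}) : Prop :=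
  (forall t, 0 <= p t) /\ \sum_(t : T) p t = 1.

Definition efp_nondegenerate (R : realType) (Xh : finType) (D : {ffun Ex Xh -> R}) : Prop :=
  forall j : bool, 0 < \sum_(z : Ex Xh | (z.1.2 == j) && ~~ z.2) D z.

Definition FPR (R : realType) (Xh H : finType) (hyp : H -> Xh * bool -> bool)
  (D : {ffun Ex Xh -> R}) (pi : {ffun H -> R}) (j : bool) : R :=
  \sum_(i : H) pi i *
    ((\sum_(z : Ex Xh | [&& z.1.2 == j, ~~ z.2 & hyp i z.1]) D z) /
     (\sum_(z : Ex Xh | (z.1.2 == j) && ~~ z.2) D z)).

Definition DeltaFPR (R : realType) (Xh H : finType) (hyp : H -> Xh * bool -> bool)
  (D : {ffun Ex Xh -> R}) (pi : {ffun H -> R}) : R :=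
  FPR hyp D pi true - FPR hyp D pi false.

Definition EFP (R : realType) (Xh H : finType) (hyp : H -> Xh * bool -> bool)
  (D : {ffun Ex Xh -> R}) (gamma : R) (pi : {ffun H -> R}) : bool :=
  `|DeltaFPR hyp D pi| <= gamma.

Definition pol_loss (R : realType) (Xh H : finType) (hyp : H -> Xh * bool -> bool)
  (D : {ffun Ex Xh -> R}) (pi : {ffun H -> R}) : R :=
  \sum_(i : H) pi i * \sum_(z : Ex Xh | hyp i z.1 != z.2) D z.

(* What the learner sees in a round: x_t, the hypothesis h_t it drew,
   and y_t only if its prediction h_t(x_t) was +1. *)
Definition Obs (Xh H : finType) : Type := ((Xh * bool) * H * option bool)%type.

Definition Learner (R : realType) (Xh H : finType) : Type :=
  seq (Obs Xh H) -> {ffun H -> R}.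

Definition valid_learner (R : realType) (Xh H : finType) (L : Learner R Xh H) : Prop :=
  forall hist, is_fdist (L hist).

Definition Run (Xh H : finType) (T : nat) : finType := {ffun 'I_T -> (Ex Xh * H)%type}.

Definition obs_of (Xh H : finType) (hyp : H -> Xh * bool -> bool)
  (e : (Ex Xh * H)%type) : Obs Xh H :=
  (e.1.1, e.2, if hyp e.2 e.1.1 then Some e.1.2 else None).

Definition history (Xh H : finType) (hyp : H -> Xh * bool -> bool) (T : nat)
  (w : Run Xh H T) (t : nat) : seq (Obs Xh H) :=
  [seq obs_of hyp (w i) | i : 'I_T <- [seq i <- enum 'I_T | (nat_of_ord i < t)%N]].

Definition pol_at (R : realType) (Xh H : finType) (hyp : H -> Xh * bool -> bool)
  (L : Learner R Xh H) (T : nat) (w : Run Xh H T) (t : 'I_T) : {ffun H -> R} :=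
  L (history hyp w t).

Definition run_prob (R : realType) (Xh H : finType) (hyp : H -> Xh * bool -> bool)
  (D : {ffun Ex Xh -> R}) (L : Learner R Xh H) (T : nat) (w : Run Xh H T) : R :=
  \prod_(t < T) (D (w t).1 * pol_at hyp L w t (w t).2).

Definition learner_loss (R : realType) (Xh H : finType) (hyp : H -> Xh * bool -> bool)
  (D : {ffun Ex Xh -> R}) (L : Learner R Xh H) (T : nat) : R :=
  \sum_(w : Run Xh H T) run_prob hyp D L w *
     (\sum_(t < T) (hyp (w t).2 (w t).1.1 != (w t).1.2))%:R.

Definition prob_all_fair (R : realType) (Xh H : finType) (hyp : H -> Xh * bool -> bool)
  (D : {ffun Ex Xh -> R}) (L : Learner R Xh H) (T : nat) (gamma : R) : R :=
  \sum_(w : Run Xh H T) run_prob hyp D L w *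
     ([forall t : 'I_T, EFP hyp D gamma (pol_at hyp L w t)])%:R.

Definition EFP_delta (R : realType) (Xh H : finType) (hyp : H -> Xh * bool -> bool)
  (L : Learner R Xh H) (T : nat) (gamma delta : R) : Prop :=
  forall D : {ffun Ex Xh -> R}, is_fdist D -> efp_nondegenerate D ->
    1 - delta <= prob_all_fair hyp D L T gamma.

(* Main.v *)
Require Import Defs.
From HB Require Import structures.
From mathcomp Require Import all_boot all_order all_algebra.
From mathcomp Require Import reals exp.
From mathcomp Require Import ring lra.
Import Order.TTheory GRing.Theory Num.Theory.
Local Open Scope ring_scope.
Set Implicit Arguments. Unset Strict Implicit.



Lemma history_agree (Xh H : finType) (hyp : H -> Xh * bool -> bool) (T : nat)
  (w w' : Run Xh H T) (t : nat) :
  (forall i : 'I_T, (i < t)%N -> w i = w' i) -> history hyp w t = history hyp w' t.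
Proof.
move=> Ha; rewrite /history. apply/eq_in_map => i.
rewrite mem_filter => /andP[it _]; by rewrite Ha.
Qed.

Definition upd (X : Type) (T : nat) (w : {ffun 'I_T -> X}) (k : 'I_T) (y : X) :
  {ffun 'I_T -> X} := [ffun i => if i == k then y else w i].

Definition rpk (R : realType) (Xh H : finType) (hyp : H -> Xh * bool -> bool)
  (D : {ffun Ex Xh -> R}) (L : Learner R Xh H) (T : nat) (x0 : (Ex Xh * H)%type)
  (k : nat) (w : Run Xh H T) : R :=
  (\prod_(t < T | (t < k)%N) (D (w t).1 * pol_at hyp L w t (w t).2)) *
  ([forall t : 'I_T, (k <= t)%N ==> (w t == x0)])%:R.

Unset Implicit Arguments.

Lemma comb (R : realType) (X : finType) (T : nat) (k : 'I_T) (x0 : X)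
  (phi F : {ffun 'I_T -> X} -> R) :
  (forall w : {ffun 'I_T -> X}, w k != x0 -> phi w = 0) ->
  \sum_(w : {ffun 'I_T -> X}) phi w * \sum_(y : X) F (upd w k y) = \sum_(w : {ffun 'I_T -> X}) phi (upd w k x0) * F w.
Proof.
move=> Hphi.
have -> : \sum_(w : {ffun 'I_T -> X}) phi w * \sum_(y : X) F (upd w k y) =
          \sum_(p : {ffun 'I_T -> X} * X) phi p.1 * F (upd p.1 k p.2).
  rewrite -(pair_bigA _ (fun (w : {ffun 'I_T -> X}) (y : X) => phi w * F (upd w k y))) /=.
  by apply: eq_bigr => w _; rewrite mulr_sumr.
pose psi (p : {ffun 'I_T -> X} * X) := (upd p.1 k p.2, p.1 k).
have psiK : involutive psi.
  move=> [w y]; rewrite /psi /=; congr pair.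
    by apply/ffunP => i; rewrite !ffunE; case: eqP => // ->.
  by rewrite /upd ffunE eqxx.
rewrite (reindex_inj (inv_inj psiK)) /=.
rewrite -(pair_bigA _ (fun (w : {ffun 'I_T -> X}) (y : X) => phi (upd w k y) * F (upd (upd w k y) k (w k)))) /=.
apply: eq_bigr => w _.
rewrite (bigD1 x0) //= big1 ?addr0.
  congr (_ * F _); apply/ffunP => i; rewrite !ffunE; case: eqP => // ->.
  by [].
move=> y ny; by rewrite Hphi ?mul0r // /upd ffunE eqxx.
Qed.

Lemma pol_at_agree (R : realType) (Xh H : finType) (hyp : H -> Xh * bool -> bool)
  (L : Learner R Xh H) (T : nat) (w w' : Run Xh H T) (t : 'I_T) :
  (forall i : 'I_T, (i < t)%N -> w i = w' i) -> pol_at hyp L w t = pol_at hyp L w' t.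
Proof. by move=> Ha; rewrite /pol_at (history_agree _ Ha). Qed.

Lemma upd_agree (X : Type) (T : nat) (w : {ffun 'I_T -> X}) (k : 'I_T) (y : X) (i : 'I_T) :
  (i < k)%N -> upd w k y i = w i.
Proof. by move=> ik; rewrite /upd ffunE; case: eqP => // e; rewrite e ltnn in ik. Qed.

Lemma peel (R : realType) (Xh H : finType) (hyp : H -> Xh * bool -> bool)
  (D : {ffun Ex Xh -> R}) (L : Learner R Xh H) (T : nat) (x0 : (Ex Xh * H)%type)
  (k : 'I_T) (G : Run Xh H T -> R) :
  (forall w w' : Run Xh H T, (forall i : 'I_T, (i < k.+1)%N -> w i = w' i) -> G w = G w') ->
  \sum_(w : Run Xh H T) rpk hyp D L x0 k.+1 w * G w =
  \sum_(w : Run Xh H T) rpk hyp D L x0 k w *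
     \sum_(y : (Ex Xh * H)%type) (D y.1 * pol_at hyp L w k y.2 * G (upd w k y)).
Proof.
move=> HG.
transitivity (\sum_(w : Run Xh H T) rpk hyp D L x0 k w *
     \sum_(y : (Ex Xh * H)%type)
       (fun v : Run Xh H T => D (v k).1 * pol_at hyp L v k (v k).2 * G v) (upd w k y)); last first.
  apply: eq_bigr => w _; congr (_ * _); apply: eq_bigr => y _ /=.
  rewrite {1 3}/upd !ffunE eqxx; congr (_ * _ * _).
  by rewrite (@pol_at_agree _ _ _ _ _ _ _ w) // => i; apply: upd_agree.
rewrite (@comb _ _ _ k x0 (rpk hyp D L x0 k) (fun v : Run Xh H T => D (v k).1 * pol_at hyp L v k (v k).2 * G v)); last first.
  move=> w nw; rewrite /rpk.
  suff -> : [forall t : 'I_T, (k <= t)%N ==> (w t == x0)] = false by rewrite mulr0.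
  apply/negbTE/negP => /forallP /(_ k); rewrite leqnn /=; exact/negP.
apply: eq_bigr => w _ /=; rewrite mulrA; congr (_ * _).
rewrite /rpk.
have -> : [forall t : 'I_T, (k.+1 <= t)%N ==> (w t == x0)] =
          [forall t : 'I_T, (k <= t)%N ==> (upd w k x0 t == x0)].
  apply/forallP/forallP => Hf t; have := Hf t; rewrite /upd ffunE.
    case: (t =P k) => [->|/eqP ne]; first by rewrite eqxx implybT.
    have nk : (k == t :> nat) = false by apply/negbTE; rewrite eq_sym; exact: ne.
    by rewrite [(k <= t)%N]leq_eqVlt nk.
  case: (t =P k) => [->|/eqP ne]; first by rewrite ltnn.
  have nk : (k == t :> nat) = false by apply/negbTE; rewrite eq_sym; exact: ne.
  by rewrite [(k <= t)%N]leq_eqVlt nk.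
rewrite (bigD1 k) //= [RHS]mulrC mulrA; congr (_ * _ * _).
apply: eq_big => [t|t tk]; first by rewrite ltnS ltn_neqAle andbC.
have tk' : (t < k)%N.
  move: tk => /andP[h1 h2]; have h3 : (t != k :> nat) by exact: h2.
  by rewrite ltn_neqAle h3 -ltnS.
rewrite (@pol_at_agree _ _ _ _ _ _ (upd w k x0) w t); last by move=> i it; apply: upd_agree; apply: ltn_trans tk'.
by rewrite upd_agree.
Qed.

Lemma sum_pair_Dpi (R : realType) (Xh H : finType) (D : {ffun Ex Xh -> R})
  (pi : {ffun H -> R}) (f : Ex Xh -> H -> R) :
  \sum_(y : (Ex Xh * H)%type) D y.1 * pi y.2 * f y.1 y.2 =
  \sum_(e : Ex Xh) D e * \sum_(h : H) pi h * f e h.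
Proof.
rewrite -(pair_bigA _ (fun (e : Ex Xh) (h : H) => D e * pi h * f e h)) /=.
by apply: eq_bigr => e _; rewrite mulr_sumr; apply: eq_bigr => h _; rewrite mulrA.
Qed.

Lemma sum_Dpi (R : realType) (Xh H : finType) (D : {ffun Ex Xh -> R})
  (pi : {ffun H -> R}) (f : Ex Xh -> R) :
  is_fdist pi ->
  \sum_(y : (Ex Xh * H)%type) D y.1 * pi y.2 * f y.1 = \sum_(e : Ex Xh) D e * f e.
Proof.
move=> [_ s1]; rewrite (sum_pair_Dpi R Xh H D pi (fun e _ => f e)).
by apply: eq_bigr => e _; rewrite -mulr_suml s1 mul1r.
Qed.

Lemma trunc (R : realType) (Xh H : finType) (hyp : H -> Xh * bool -> bool)
  (D : {ffun Ex Xh -> R}) (L : Learner R Xh H) (T : nat) (x0 : (Ex Xh * H)%type)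
  (G : Run Xh H T -> R) (j k : nat) :
  is_fdist D -> valid_learner L ->
  (k + j <= T)%N ->
  (forall w w' : Run Xh H T, (forall i : 'I_T, (i < k)%N -> w i = w' i) -> G w = G w') ->
  \sum_(w : Run Xh H T) rpk hyp D L x0 (k + j) w * G w =
  \sum_(w : Run Xh H T) rpk hyp D L x0 k w * G w.
Proof.
move=> [D0 D1] vL; elim: j => [|j IH] kjT HG; first by rewrite addn0.
have kj : (k + j < T)%N by rewrite -addnS.
rewrite addnS (peel R Xh H hyp D L T x0 (Ordinal kj) G); last first.
  move=> w w' ag; apply: HG => i ik; apply: ag; rewrite /=; apply: leq_trans ik _.
  by rewrite -addnS leq_addr.
rewrite -(IH (ltnW kj) HG).
apply: eq_bigr => w _ /=; congr (_ * _).
have -> : \sum_(y : (Ex Xh * H)%type) D y.1 * pol_at hyp L w (Ordinal kj) y.2 *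
            G (upd w (Ordinal kj) y) =
          \sum_(y : (Ex Xh * H)%type) D y.1 * pol_at hyp L w (Ordinal kj) y.2 * G w.
  apply: eq_bigr => y _; congr (_ * _); apply: HG => i ik; apply: upd_agree => /=.
  by apply: leq_trans ik _; rewrite leq_addr.
by rewrite (sum_Dpi R Xh H D _ (fun _ => G w) (vL _)) -mulr_suml D1 mul1r.
Qed.

Lemma rpk_T (R : realType) (Xh H : finType) (hyp : H -> Xh * bool -> bool)
  (D : {ffun Ex Xh -> R}) (L : Learner R Xh H) (T : nat) (x0 : (Ex Xh * H)%type)
  (w : Run Xh H T) : rpk hyp D L x0 T w = run_prob hyp D L w.
Proof.
rewrite /rpk /run_prob.
have -> : [forall t : 'I_T, (T <= t)%N ==> (w t == x0)] = true.
  by apply/forallP => t; rewrite leqNgt ltn_ord.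
by rewrite mulr1; apply: eq_bigl => t; rewrite ltn_ord.
Qed.

Lemma sum_rpk0 (R : realType) (Xh H : finType) (hyp : H -> Xh * bool -> bool)
  (D : {ffun Ex Xh -> R}) (L : Learner R Xh H) (T : nat) (x0 : (Ex Xh * H)%type)
  (G : Run Xh H T -> R) :
  \sum_(w : Run Xh H T) rpk hyp D L x0 0 w * G w = G [ffun => x0].
Proof.
rewrite (bigD1 [ffun => x0]) //= big1 ?addr0.
  rewrite /rpk big_pred0 ?mul1r; last by move=> t; rewrite ltn0.
  have -> : [forall t : 'I_T, (0 <= t)%N ==> ([ffun => x0] t == x0)] = true.
    by apply/forallP => t; rewrite ffunE eqxx implybT.
  by rewrite mul1r.
move=> w nw; rewrite /rpk.
have -> : [forall t : 'I_T, (0 <= t)%N ==> (w t == x0)] = false.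
  apply/negbTE/negP => /forallP Hf; move/negP: nw; apply; apply/eqP/ffunP => t.
  by rewrite ffunE; apply/eqP; have := Hf t.
by rewrite mulr0 mul0r.
Qed.

Lemma prodf (R : realType) (Xh H : finType) (hyp : H -> Xh * bool -> bool)
  (D : {ffun Ex Xh -> R}) (L : Learner R Xh H) (T : nat) (x0 : (Ex Xh * H)%type)
  (f : Ex Xh -> R) (k : nat) :
  valid_learner L -> (k <= T)%N ->
  \sum_(w : Run Xh H T) rpk hyp D L x0 k w * \prod_(t < T | (t < k)%N) f (w t).1 =
  (\sum_(e : Ex Xh) D e * f e) ^+ k.
Proof.
move=> vL; elim: k => [|k IH] kT.
  rewrite sum_rpk0 expr0 big_pred0 // => t; by rewrite ltn0.
rewrite (peel R Xh H hyp D L T x0 (Ordinal kT)); last first.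
  move=> w w' ag; apply: eq_bigr => t tk; by rewrite ag.
rewrite exprS -(IH (ltnW kT)) mulr_sumr; apply: eq_bigr => w _ /=.
have -> : \sum_(y : (Ex Xh * H)%type) D y.1 * pol_at hyp L w (Ordinal kT) y.2 *
     \prod_(t < T | (t < k.+1)%N) f (upd w (Ordinal kT) y t).1 =
   \sum_(y : (Ex Xh * H)%type) D y.1 * pol_at hyp L w (Ordinal kT) y.2 *
     f y.1 * \prod_(t < T | (t < k)%N) f (w t).1.
  apply: eq_bigr => y _; rewrite -[RHS]mulrA; congr (_ * _).
  rewrite (bigD1 (Ordinal kT)) //=; congr (f _ * _).
    by rewrite /upd ffunE eqxx.
  apply: eq_big => [t|t tk].
    by rewrite ltnS ltn_neqAle andbC.
  rewrite upd_agree //; move: tk => /andP[h1 h2]; have h3 : (t != k :> nat) by exact: h2.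
  by rewrite ltn_neqAle h3 -ltnS.
rewrite -mulr_suml (sum_Dpi R Xh H D _ f (vL _)).
by rewrite mulrCA.
Qed.

Lemma round_loss (R : realType) (Xh H : finType) (hyp : H -> Xh * bool -> bool)
  (D : {ffun Ex Xh -> R}) (L : Learner R Xh H) (T : nat) (x0 : (Ex Xh * H)%type)
  (t : 'I_T) :
  is_fdist D -> valid_learner L ->
  \sum_(w : Run Xh H T) run_prob hyp D L w * (hyp (w t).2 (w t).1.1 != (w t).1.2)%:R =
  \sum_(w : Run Xh H T) run_prob hyp D L w * pol_loss hyp D (pol_at hyp L w t).
Proof.
move=> fD vL.
have e1 : (t.+1 + (T - t.+1))%N = T by rewrite subnKC.
have e2 : (t + (T - t))%N = T by rewrite subnKC // ltnW.
transitivity (\sum_(w : Run Xh H T) rpk hyp D L x0 (t.+1 + (T - t.+1)) w *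
   (hyp (w t).2 (w t).1.1 != (w t).1.2)%:R).
  by apply: eq_bigr => w _; rewrite e1 rpk_T.
transitivity (\sum_(w : Run Xh H T) rpk hyp D L x0 (t + (T - t)) w *
   pol_loss hyp D (pol_at hyp L w t)); last first.
  by apply: eq_bigr => w _; rewrite e2 rpk_T.
rewrite trunc //; last by move=> w w' ag; rewrite ag.
rewrite [RHS]trunc //; last by move=> w w' ag; rewrite (pol_at_agree R Xh H hyp L T w w' t ag).
rewrite (peel R Xh H hyp D L T x0 t); last by move=> w w' ag; rewrite ag.
apply: eq_bigr => w _; congr (_ * _).
have -> : \sum_(y : (Ex Xh * H)%type) D y.1 * pol_at hyp L w t y.2 *
     (hyp (upd w t y t).2 (upd w t y t).1.1 != (upd w t y t).1.2)%:R =
   \sum_(y : (Ex Xh * H)%type) D y.1 * pol_at hyp L w t y.2 *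
     (fun e h => (hyp h e.1 != e.2)%:R) y.1 y.2.
  by apply: eq_bigr => y _; rewrite /upd ffunE eqxx.
rewrite (sum_pair_Dpi R Xh H D _ (fun e h => (hyp h e.1 != e.2)%:R)) /pol_loss.
rewrite (eq_bigr (fun e => \sum_(h : H) D e * (pol_at hyp L w t h * (hyp h e.1 != e.2)%:R)));
  last by move=> e _; rewrite mulr_sumr.
rewrite exchange_big; apply: eq_bigr => h _.
rewrite [in RHS]big_mkcond [RHS]mulr_sumr; apply: eq_bigr => e _ /=.
  by case: (hyp h e.1 != e.2); rewrite ?mulr1 ?mulr0 // mulrC.
  by rewrite e2.
by rewrite e1.
Qed.

Set Implicit Arguments. Unset Strict Implicit.


Lemma sum8 (R : realType) (F : Ex bool -> R) : \sum_(z : Ex bool) F z =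
  F ((true,true),true) + F ((true,true),false) + F ((true,false),true) + F ((true,false),false) +
  F ((false,true),true) + F ((false,true),false) + F ((false,false),true) + F ((false,false),false).
Proof.
transitivity (\sum_(z : Ex bool) F (z.1, z.2)); first by apply: eq_bigr => -[].
rewrite -(pair_bigA _ (fun (x : bool * bool) (y : bool) => F (x, y))) /=.
transitivity (\sum_(x : bool * bool) (fun x => \sum_(j : bool) F (x, j)) (x.1, x.2)); first by apply: eq_bigr => -[].
rewrite -(pair_bigA _ (fun (x y : bool) => \sum_(j : bool) F ((x, y), j))) /=.
by rewrite !big_bool /= !addrA.
Qed.

Lemma sumc (R : realType) (P : pred (Ex bool)) (F : Ex bool -> R) : \sum_(z : Ex bool | P z) F z =
  \sum_(z : Ex bool) (if P z then F z else 0).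
Proof. by rewrite big_mkcond. Qed.

Lemma sumc8 (R : realType) (P : pred (Ex bool)) (F : Ex bool -> R) : \sum_(z : Ex bool | P z) F z =
  \sum_(z : Ex bool) (if P z then F z else 0).
Proof. by rewrite big_mkcond. Qed.

Lemma sumo (R : realType) (F : option bool -> R) : \sum_(i : option bool) F i = F None + F (Some true) + F (Some false).
Proof.
rewrite (bigD1 None) //= (bigD1 (Some true)) //= (bigD1 (Some false)) //= big1 ?addr0 ?addrA //.
by move=> [[]|].
Qed.

Definition hypc (i : option bool) (x : bool * bool) : bool := if i is Some b then b else x.1.

Definition dc (R : realType) (p : R) (e : Ex bool) : R :=
  match e with
  | ((true,true),true) => p
  | ((false,true),false) => p
  | ((false,false),false) => 1/2 - p
  | ((true,false),true) => 1/2 - p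
  | _ => 0 end.

Definition dc' (R : realType) (p : R) (e : Ex bool) : R :=
  match e with
  | ((true,true),false) => p
  | ((false,true),false) => p
  | ((false,false),false) => 1/2 - p
  | ((true,false),true) => 1/2 - p
  | _ => 0 end.

Definition Dc (R : realType) (p : R) : {ffun Ex bool -> R} := [ffun e => dc p e].
Definition Dc' (R : realType) (p : R) : {ffun Ex bool -> R} := [ffun e => dc' p e].

Ltac crunch := repeat (rewrite sumc sum8); rewrite /= !ffunE /dc /dc' /=.

Lemma fdist_Dc (R : realType) (p : R) : 0 < p -> p < 1/4 -> is_fdist (Dc p).
Proof.
move=> p0 p1; split; first by move=> [[[] []] []]; rewrite ffunE /dc /dc' /=; lra.
crunch; lra.
Qed.

Lemma fdist_Dc' (R : realType) (p : R) : 0 < p -> p < 1/4 -> is_fdist (Dc' p).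
Proof.
move=> p0 p1; split; first by move=> [[[] []] []]; rewrite ffunE /dc /dc' /=; lra.
crunch; lra.
Qed.

Lemma nd_Dc (R : realType) (p : R) : 0 < p -> p < 1/4 -> efp_nondegenerate (Dc p).
Proof. move=> p0 p1 [] /=; crunch; lra. Qed.

Lemma nd_Dc' (R : realType) (p : R) : 0 < p -> p < 1/4 -> efp_nondegenerate (Dc' p).
Proof. move=> p0 p1 [] /=; crunch; lra. Qed.

Lemma delta_Dc' (R : realType) (p : R) (pi : {ffun option bool -> R}) :
  0 < p -> p < 1/4 -> DeltaFPR hypc (Dc' p) pi = pi None / 2.
Proof.
move=> p0 p1; rewrite /DeltaFPR /FPR !sumo; crunch.
rewrite !addr0 !add0r.
field; lra.
Qed.

Lemma delta_Dc (R : realType) (p : R) (pi : {ffun option bool -> R}) :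
  0 < p -> p < 1/4 -> pi (Some true) = 0 -> pi (Some false) = 0 -> DeltaFPR hypc (Dc p) pi = 0.
Proof.
move=> p0 p1 e1 e2; rewrite /DeltaFPR /FPR !sumo e1 e2; crunch.
rewrite !addr0 !add0r.
field; lra.
Qed.

Lemma loss_Dc (R : realType) (p : R) (pi : {ffun option bool -> R}) :
  0 < p -> p < 1/4 -> is_fdist pi -> pol_loss hypc (Dc p) pi = (1 - pi None) / 2.
Proof.
move=> p0 p1 [_ s1]; move: s1; rewrite /pol_loss !sumo => s1; crunch.
rewrite !addr0 !add0r.
have -> : pi None = 1 - pi (Some true) - pi (Some false) by lra.
by field.
Qed.

Unset Implicit Arguments.


Lemma bernoulli (R : realType) (p : R) (n : nat) : 0 <= p <= 1 -> 1 - n%:R * p <= (1 - p) ^+ n.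
Proof.
move=> /andP[p0 p1]; elim: n => [|n IH]; first by rewrite expr0 mul0r subr0.
rewrite exprS -natr1.
have h0 : 0 <= (1 - p) ^+ n by apply: exprn_ge0; lra.
have h1 : 0 <= n%:R * p * p :> R by apply: mulr_ge0 => //; apply: mulr_ge0.
nra.
Qed.

Lemma prod_ind (R : realType) (T : nat) (b : 'I_T -> bool) :
  \prod_(t < T | (t < T)%N) ((b t)%:R : R) = ([forall t, b t])%:R.
Proof.
rewrite (eq_bigl xpredT); last by move=> t; rewrite ltn_ord.
case Hb: [forall t, b t].
  by move/forallP: Hb => Hb; rewrite big1 // => t _; rewrite Hb.
by move/negbT/forallPn: Hb => [t nt]; rewrite (bigD1 t) //= (negbTE nt) mul0r.
Qed.

Lemma run_prob_ge0 (R : realType) (Xh H : finType) (hyp : H -> Xh * bool -> bool)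
  (D : {ffun Ex Xh -> R}) (L : Learner R Xh H) (T : nat) (w : Run Xh H T) :
  is_fdist D -> valid_learner L -> 0 <= run_prob hyp D L w.
Proof.
move=> [D0 _] vL; rewrite /run_prob; apply: prodr_ge0 => t _.
by apply: mulr_ge0; [apply: D0 | case: (vL (history hyp w t)) => h _; apply: h].
Qed.

Lemma DcA (R : realType) (p : R) (e : Ex bool) : ~~ (e.1.1 && e.1.2) -> Dc p e = Dc' p e.
Proof. by case: e => [[[] []] []]; rewrite //= !ffunE. Qed.

Theorem theorem4 (R : realType) :
  exists c : R, 0 < c /\
  forall (alpha : R) (T : nat) (delta : R),
    0 < alpha -> alpha < 1 / 2 ->
    (16 : R) `^ (1 / alpha) <= T%:R ->
    delta <= 24 / 100 ->
    exists (Xh H : finType) (hyp : H -> Xh * bool -> bool),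
      (exists i : H, forall x, hyp i x = true) /\
      (exists i : H, forall x, hyp i x = false) /\
      forall L : Learner R Xh H,
        valid_learner L ->
        EFP_delta hyp L T (T%:R `^ (- alpha)) delta ->
        exists D : {ffun Ex Xh -> R},
          is_fdist D /\ efp_nondegenerate D /\
          exists pistar : {ffun H -> R},
            is_fdist pistar /\ EFP hyp D 0 pistar /\
            c * T%:R `^ (2 * alpha) <=
              learner_loss hyp D L T - T%:R * pol_loss hyp D pistar.
Proof.
exists (1/4); split; first lra.
move=> alpha T delta a0 a1 hT hd.
have h16 : (16 : R) <= 16 `^ (1 / alpha).
  apply: le1r_powR; first lra.
  rewrite ler_pdivlMr //; lra.
have T16 : (16 : R) <= T%:R by apply: le_trans hT.
have Tal : T%:R `^ (- alpha) <= 1 / 16 :> R.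
  rewrite powRN.
  have : (16 : R) <= T%:R `^ alpha.
    have -> : (16 : R) = (16 `^ (1 / alpha)) `^ alpha.
      by rewrite -powRrM mul1r mulVf ?powRr1 //; lra.
    apply: ge0_ler_powR => //; [lra | rewrite nnegrE powR_ge0 // | rewrite nnegrE; lra].
  move=> h; rewrite div1r lef_pV2 ?posrE //; lra.
have T2 : T%:R `^ (2 * alpha) <= T%:R :> R by apply: ler1_powR; lra.
set Tn : R := T%:R in T16 Tal T2 *.
set p : R := 1 / (100 * Tn).
have p0 : 0 < p by rewrite /p; apply: divr_gt0; lra.
have Tp : Tn * p = 1 / 100 by rewrite /p; field; lra.
have p1 : p < 1 / 4 by nra.
exists bool, (option bool), hypc.
split; first by exists (Some true).
split; first by exists (Some false).
move=> L vL Hfair.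
exists (Dc p); split; first exact: fdist_Dc.
split; first exact: nd_Dc.
pose pistar : {ffun option bool -> R} := [ffun i => (i == None)%:R].
have fpi : is_fdist pistar.
  split; first by move=> i; rewrite ffunE ler0n.
  by rewrite sumo !ffunE /=; lra.
exists pistar; split => //.
split; first by rewrite /EFP delta_Dc // ?ffunE // normr0.
rewrite loss_Dc // ffunE /= subrr mul0r mulr0 subr0.
pose A (w : Run bool (option bool) T) : bool := [forall t, ~~ ((w t).1.1.1 && (w t).1.1.2)].
pose F (w : Run bool (option bool) T) : bool :=
  [forall t, EFP hypc (Dc' p) (Tn `^ (- alpha)) (pol_at hypc L w t)].
pose x0 : (Ex bool * option bool)%type := (((true,true),true), None).
have fD := fdist_Dc p0 p1; have fD' := fdist_Dc' p0 p1.
have PF : 76/100 <= \sum_(w : Run bool (option bool) T) run_prob hypc (Dc' p) L w * (F w)%:R.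
  have h := Hfair (Dc' p) fD' (nd_Dc' p0 p1); apply: le_trans h; lra.
have S1 : \sum_(w : Run bool (option bool) T) run_prob hypc (Dc' p) L w = 1.
  have := prodf R bool (option bool) hypc (Dc' p) L T x0 (fun _ => 1) T vL (leqnn T).
  have e1 : \sum_(e : Ex bool) Dc' p e * 1 = 1.
    under eq_bigr do rewrite mulr1; by case: fD'.
  rewrite e1 expr1n => h; rewrite -h; apply: eq_bigr => w _.
  by rewrite rpk_T big1 ?mulr1.
have PA : 99/100 <= \sum_(w : Run bool (option bool) T) run_prob hypc (Dc' p) L w * (A w)%:R.
  have := prodf R bool (option bool) hypc (Dc' p) L T x0
     (fun e => (~~ (e.1.1 && e.1.2))%:R) T vL (leqnn T).
  have e1 : \sum_(e : Ex bool) Dc' p e * (~~ (e.1.1 && e.1.2))%:R = 1 - p.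
    by repeat (rewrite sumc sum8); rewrite /= !ffunE /dc' /=; lra.
  rewrite e1 => h.
  have hb := bernoulli R p T; rewrite -/Tn Tp in hb.
  have : 1 - 1/100 <= (1 - p) ^+ T by apply: hb; apply/andP; split; lra.
  rewrite -h => h2.
  suff <- : \sum_(w : Run bool (option bool) T) rpk hypc (Dc' p) L x0 T w *
       \prod_(t < T | (t < T)%N) (fun e : Ex bool => (~~ (e.1.1 && e.1.2))%:R) (w t).1 =
     \sum_(w : Run bool (option bool) T) run_prob hypc (Dc' p) L w * (A w)%:R by lra.
  apply: eq_bigr => w _.
  by rewrite rpk_T (prod_ind R T (fun t => ~~ ((w t).1.1.1 && (w t).1.1.2))).
have PAF : 3/4 <= \sum_(w : Run bool (option bool) T) run_prob hypc (Dc p) L w * (A w && F w)%:R.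
  have -> : \sum_(w : Run bool (option bool) T) run_prob hypc (Dc p) L w * (A w && F w)%:R =
            \sum_(w : Run bool (option bool) T) run_prob hypc (Dc' p) L w * (A w && F w)%:R.
    apply: eq_bigr => w _; case Aw: (A w) => /=; last by rewrite !mulr0.
    congr (_ * _); rewrite /run_prob; apply: eq_bigr => t _; rewrite DcA //.
    exact: (forallP Aw t).
  have e : \sum_(w : Run bool (option bool) T) run_prob hypc (Dc' p) L w * ((F w)%:R + (A w)%:R - 1) =
     \sum_(w : Run bool (option bool) T) run_prob hypc (Dc' p) L w * (F w)%:R +
     \sum_(w : Run bool (option bool) T) run_prob hypc (Dc' p) L w * (A w)%:R -
     \sum_(w : Run bool (option bool) T) run_prob hypc (Dc' p) L w.
    by rewrite -big_split -sumrB; apply: eq_bigr => w _; rewrite mulrBr mulr1 mulrDr.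
  have : \sum_(w : Run bool (option bool) T) run_prob hypc (Dc' p) L w * ((F w)%:R + (A w)%:R - 1)
         <= \sum_(w : Run bool (option bool) T) run_prob hypc (Dc' p) L w * (A w && F w)%:R.
    apply: ler_sum => w _; apply: ler_wpM2l; first exact: run_prob_ge0.
    by case: (A w); case: (F w); rewrite /=; lra.
  rewrite e; lra.
rewrite /learner_loss.
have -> : \sum_(w : Run bool (option bool) T) run_prob hypc (Dc p) L w *
      (\sum_(t < T) (hypc (w t).2 (w t).1.1 != (w t).1.2))%:R =
    \sum_(t < T) \sum_(w : Run bool (option bool) T) run_prob hypc (Dc p) L w *
      (hypc (w t).2 (w t).1.1 != (w t).1.2)%:R.
  rewrite exchange_big /=; apply: eq_bigr => w _; by rewrite natr_sum mulr_sumr.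
have step : forall t : 'I_T, (7/16) * (3/4) <=
    \sum_(w : Run bool (option bool) T) run_prob hypc (Dc p) L w *
      (hypc (w t).2 (w t).1.1 != (w t).1.2)%:R.
  move=> t; rewrite (round_loss R bool (option bool) hypc (Dc p) L T x0 t fD vL).
  apply: le_trans (_ : (7/16) * \sum_(w : Run bool (option bool) T)
        run_prob hypc (Dc p) L w * (A w && F w)%:R <= _).
    by apply: ler_wpM2l; lra.
  rewrite mulr_sumr; apply: ler_sum => w _.
  rewrite mulrCA; apply: ler_wpM2l; first exact: run_prob_ge0.
  have fpi' := vL (history hypc w t).
  rewrite loss_Dc //.
  case: fpi' => pi0 pis; move: pis; rewrite sumo => pis.
  have q1 := pi0 (Some true); have q2 := pi0 (Some false); have q0 := pi0 None.
  rewrite /pol_at.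
  case Fw: (F w); last by rewrite andbF mulr0; lra.
  have := forallP Fw t; rewrite /EFP delta_Dc' // => h.
  have h2 := ler_norm (L (history hypc w t) None / 2).
  rewrite /pol_at in h h2.
  by case: (A w) => /=; lra.
apply: le_trans (_ : 1/4 * Tn <= _); first by apply: ler_wpM2l => //; lra.
apply: le_trans (_ : \sum_(t < T) ((7/16) * (3/4) : R) <= _); last first.
  by apply: ler_sum => t _; exact: step.
rewrite sumr_const card_ord -mulr_natr -/Tn; lra.
Qed.
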